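(* Let $\mathbf{g}\in H_{1,2,2}$ with $N(\mathbf{g})$ even. Then there exist $\mathbf{h},\mathbf{h}'\in H_{1,2,2}$ with $\mathbf{g} = (1+\mathbf{i})\mathbf{h}$ and $\mathbf{g} = \mathbf{h}'(1+\mathbf{i})$; i.e. $1+\mathbf{i}$ is both a left factor and a right factor of $\mathbf{g}$ in $H_{1,2,2}$.
   Context: Let $\mathbf{i},\mathbf{j},\mathbf{k}$ be the standard basis units of the real quaternions. For a quaternion $\mathbf{q}=q_1+q_2\mathbf{i}+q_3\mathbf{j}+q_4\mathbf{k}$, its conjugate is $\overline{\mathbf{q}}=q_1-q_2\mathbf{i}-q_3\mathbf{j}-q_4\mathbf{k}$ and its norm is $N(\mathbf{q})=\mathbf{q}\overline{\mathbf{q}}$. $H_{1,2,2}$ is the $\mathbb{Z}$-module generated by $\mathbf{v}_1=1$, $\mathbf{v}_2=\mathbf{i}$, $\mathbf{v}_3=\tfrac12(1+\mathbf{i}+\sqrt2\,\mathbf{j})$, $\mathbf{v}_4=\tfrac12(1+\mathbf{i}+\sqrt2\,\mathbf{k})$; it is a subring of the quaternions, closed under conjugation, with the norm taking nonnegative integer values on it. *)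

(* Defs.v *)
From Stdlib Require Import Reals ZArith.
Open Scope R_scope.

Record quat := Quat { qr : R; qi_ : R; qj_ : R; qk_ : R }.

Definition qadd (p q : quat) : quat :=
  Quat (qr p + qr q) (qi_ p + qi_ q) (qj_ p + qj_ q) (qk_ p + qk_ q).

Definition qscale (r : R) (q : quat) : quat :=
  Quat (r * qr q) (r * qi_ q) (r * qj_ q) (r * qk_ q).

(* Hamilton product: i^2 = j^2 = k^2 = ijk = -1. *)
Definition qmul (p q : quat) : quat :=
  Quat (qr p * qr q - qi_ p * qi_ q - qj_ p * qj_ q - qk_ p * qk_ q)
       (qr p * qi_ q + qi_ p * qr q + qj_ p * qk_ q - qk_ p * qj_ q)
       (qr p * qj_ q - qi_ p * qk_ q + qj_ p * qr q + qk_ p * qi_ q)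
       (qr p * qk_ q + qi_ p * qj_ q - qj_ p * qi_ q + qk_ p * qr q).

Definition qconj (q : quat) : quat := Quat (qr q) (- qi_ q) (- qj_ q) (- qk_ q).

Definition qnorm (q : quat) : quat := qmul q (qconj q).

Definition qreal (r : R) : quat := Quat r 0 0 0.

Definition q1 : quat := qreal 1.
Definition qI : quat := Quat 0 1 0 0.
Definition qJ : quat := Quat 0 0 1 0.
Definition qK : quat := Quat 0 0 0 1.

Definition v1 : quat := q1.
Definition v2 : quat := qI.
Definition v3 : quat := Quat (1/2) (1/2) (sqrt 2 / 2) 0.
Definition v4 : quat := Quat (1/2) (1/2) 0 (sqrt 2 / 2).

Definition in_H122 (q : quat) : Prop :=
  exists a b c d : Z,
    q = qadd (qadd (qscale (IZR a) v1) (qscale (IZR b) v2))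
             (qadd (qscale (IZR c) v3) (qscale (IZR d) v4)).

Definition one_plus_i : quat := qadd q1 qI.

(* Main.v *)
Require Import Defs.
From Stdlib Require Import Reals ZArith Lia Lra.
Open Scope R_scope.

Lemma quat_ext (p q : quat) :
  qr p = qr q -> qi_ p = qi_ q -> qj_ p = qj_ q -> qk_ p = qk_ q -> p = q.
Proof. destruct p, q; simpl; intros; subst; reflexivity. Qed.

Lemma sqpar (x : Z) : exists t, (x*x = x + 2*t)%Z.
Proof.
  destruct (Z.Even_or_Odd x) as [[y Hy]|[y Hy]]; subst;
  [exists (2*y*y - y)%Z | exists (2*y*y + y)%Z]; ring.
Qed.
Lemma parity (a b c d n : Z) :
  ((2*a+c+d)*(2*a+c+d) + (2*b+c+d)*(2*b+c+d) + 2*c*c + 2*d*d = 8*n)%Z ->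
  exists k l : Z, (c + d = 2*k)%Z /\ (a + b + c = 2*l)%Z.
Proof.
  intros H. cut ((exists k, c + d = 2*k)%Z /\ (exists l, a + b + c = 2*l)%Z).
  { intros [[k Hk] [l Hl]]; exists k, l; split; assumption. }
  destruct (Z.Even_or_Odd a) as [[a' Ha]|[a' Ha]];
  destruct (Z.Even_or_Odd b) as [[b' Hb]|[b' Hb]];
  destruct (Z.Even_or_Odd c) as [[c' Hc]|[c' Hc]];
  destruct (Z.Even_or_Odd d) as [[d' Hd]|[d' Hd]]; subst;
  destruct (sqpar a') as [ta Ta]; destruct (sqpar b') as [tb Tb];
  destruct (sqpar c') as [tc Tc]; destruct (sqpar d') as [td Td];
  first [exfalso; lia | clear H Ta Tb Tc Td; split;
   [ first [exists (c'+d')%Z; ring | exists (c'+d'+1)%Z; ring]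
   | first [exists (a'+b'+c')%Z; ring | exists (a'+b'+c'+1)%Z; ring | exists (a'+b'+c'+2)%Z; ring]]].
Qed.

Theorem theorem3 (g : quat) :
  in_H122 g ->
  (exists n : Z, qnorm g = qreal (2 * IZR n)) ->
  exists h h' : quat,
    in_H122 h /\ in_H122 h' /\
    g = qmul one_plus_i h /\ g = qmul h' one_plus_i.
Proof.
  intros [a [b [c [d ->]]]] [n Hn].
  apply (f_equal qr) in Hn.
  unfold qnorm, qmul, qconj, qadd, qscale, qreal, v1, v2, v3, v4, q1, qreal, qI in Hn;
  simpl in Hn.
  assert (S2 : sqrt 2 * sqrt 2 = 2) by (apply sqrt_sqrt; lra).
  assert (HZ : ((2*a+c+d)*(2*a+c+d) + (2*b+c+d)*(2*b+c+d) + 2*c*c + 2*d*d = 8*n)%Z).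
  { apply eq_IZR. repeat rewrite ?plus_IZR, ?mult_IZR.
    set (s := sqrt 2) in *.
    assert (Hc2 : IZR c*IZR c*(s*s) = 2*(IZR c*IZR c)) by (rewrite S2; ring).
    assert (Hd2 : IZR d*IZR d*(s*s) = 2*(IZR d*IZR d)) by (rewrite S2; ring).
    assert (Hs : (s/2)^2 = 1/2) by (unfold pow; rewrite Rmult_1_r; replace (s/2*(s/2)) with (s*s/4) by field; rewrite S2; field).
    ring_simplify in Hn. rewrite Hs in Hn. ring_simplify. ring_simplify in Hn. lra. }
  destruct (parity a b c d n HZ) as [k [l [Hk Hl]]].
  assert (Ec : c = (2*k - d)%Z) by lia.
  assert (Ea : a = (2*l - b - 2*k + d)%Z) by lia.
  subst a c.
  exists (qadd (qadd (qscale (IZR l) v1) (qscale (IZR (l - (2*l - b - 2*k + d) - k)) v2))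
             (qadd (qscale (IZR k) v3) (qscale (IZR (d - k)) v4))).
  exists (qadd (qadd (qscale (IZR (l + d - k)) v1) (qscale (IZR (l - (2*l - b - 2*k + d) - (2*k-d))) v2))
             (qadd (qscale (IZR (k - d)) v3) (qscale (IZR k) v4))).
  split; [eexists _, _, _, _; reflexivity|].
  split; [eexists _, _, _, _; reflexivity|].
  unfold one_plus_i, qmul, qadd, qscale, v1, v2, v3, v4, q1, qreal, qI.
  repeat rewrite ?minus_IZR, ?plus_IZR, ?mult_IZR.
  split; apply quat_ext; cbn [qr qi_ qj_ qk_]. all: field.
Qed.
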